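(* For any symmetric design $P$: (1) $C_d$ is completely symmetric; (2) $\mathrm{tr}(C_d)=q_d^*$; (3) moreover, for any design $P$ (not necessarily symmetric) there exists a symmetric design with the same value of $q_d^*$.
   Context: Fix integers $p,t\ge2$, $n\ge1$ and a probability vector $\vec a=(a_1,\dots,a_p)$. Write $a_{jk}=\sum_{i=j}^ka_i$ ($a_{1,0}=0$, $a_{p+1,p}=0$), $\alpha_k=n^{-1}((n+1)a_k+a_{1,k-1}^{n+1}-a_{1k}^{n+1})$, $\beta_k=a_k+a_{k+1,p}a_{1k}^n-a_{kp}a_{1,k-1}^n$. $J_k$ is the $k\times k$ all-ones matrix, $B_k=I_k-J_k/k$, $B^k_p$ the $p\times p$ matrix with $B_k$ in its upper-left $k\times k$ block and zeros elsewhere; $A=\sum_k\alpha_kB^k_p$, $B=\sum_k\beta_kB^k_p$. $\mathcal S=\{1,\dots,t\}^p$; for $s=(t_1,\dots,t_p)$, $T_s$ is the $p\times t$ matrix with $(k,i)$ entry $1$ iff $t_k=i$, and $F_s$ the $p\times t$ matrix with zero first row and $(k,i)$ entry $1$ iff $t_{k-1}=i$ ($k\ge2$). A design is a probability vector $P=(p_s)_{s\in\mathcal S}$. With $\bar T=\sum_sp_sT_s$, $\bar F=\sum_sp_sF_s$: $C_{d11}=n(\sum_sp_sT_s'AT_s-\bar T'B\bar T)$, $C_{d12}=n(\sum_sp_sT_s'AF_s-\bar T'B\bar F)=C_{d21}'$, $C_{d22}=n(\sum_sp_sF_s'AF_s-\bar F'B\bar F)$, $C_d=C_{d11}-C_{d12}C_{d22}^-C_{d21}$.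 Let $\hat T_s=T_sB_t$, $\hat F_s=F_sB_t$, $q_{s11}=\mathrm{tr}(\hat T_s'A\hat T_s)$, $q_{s12}=\mathrm{tr}(\hat T_s'A\hat F_s)$, $q_{s22}=\mathrm{tr}(\hat F_s'A\hat F_s)$, $q_{dij}=n\sum_sp_sq_{sij}$, and $q_d^*=q_{d11}-q_{d12}^2/q_{d22}$ (equivalently $q_d^*=n\min_{x\in\mathbb R}\sum_sp_s(q_{s11}+2q_{s12}x+q_{s22}x^2)$). For a permutation $\sigma$ of $\{1,\dots,t\}$ let $\sigma s=(\sigma(t_1),\dots,\sigma(t_p))$; $P$ is symmetric if $p_{\sigma s}=p_s$ for all $\sigma$ and $s$. A $t\times t$ matrix is completely symmetric if it is of the form $aI_t+bJ_t$. *)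

(* Defs.v *)
From HB Require Import structures.
From mathcomp Require Import all_boot all_order all_algebra all_fingroup.
Set Implicit Arguments. Unset Strict Implicit. Unset Printing Implicit Defensive.
Import Order.TTheory GRing.Theory Num.Theory.
Local Open Scope ring_scope.

Section Defs.
Variables (R : realFieldType) (p t n : nat) (a : 'I_p -> R).

(* Rows k = 1..p of the paper are the ordinals 0..p-1; treatments 1..t are 0..t-1. *)

(* a_{1k}, a_{1,k-1}, a_{k+1,p}, a_{kp} for the paper's index k (= ordinal k + 1) *)
Definition a_1k (k : 'I_p) : R := \sum_(i < p | (i <= k)%N) a i.
Definition a_1km1 (k : 'I_p) : R := \sum_(i < p | (i < k)%N) a i.
Definition a_k1p (k : 'I_p) : R := \sum_(i < p | (k < i)%N) a i.
Definition a_kp (k : 'I_p) : R := \sum_(i < p | (k <= i)%N) a i.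

Definition alpha (k : 'I_p) : R :=
  (n%:R)^-1 * ((n.+1)%:R * a k + a_1km1 k ^+ n.+1 - a_1k k ^+ n.+1).
Definition beta (k : 'I_p) : R :=
  a k + a_k1p k * a_1k k ^+ n - a_kp k * a_1km1 k ^+ n.

Definition Bpk (k : 'I_p) : 'M[R]_p :=
  \matrix_(i < p, j < p)
    (if (i <= k)%N && (j <= k)%N then (i == j)%:R - ((k.+1)%:R)^-1 else 0).

Definition Amat : 'M[R]_p := \sum_(k < p) alpha k *: Bpk k.
Definition Bmat : 'M[R]_p := \sum_(k < p) beta k *: Bpk k.

Definition seqT := {ffun 'I_p -> 'I_t}.

Definition Tmat (s : seqT) : 'M[R]_(p, t) :=
  \matrix_(k < p, i < t) ((s k == i)%:R).
(* zero first row; row k (k >= 2) has a 1 in column t_{k-1} *)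
Definition Fmat (s : seqT) : 'M[R]_(p, t) :=
  \matrix_(k < p, i < t)
    ([exists k' : 'I_p, (k'.+1 == k :> nat) && (s k' == i)]%:R).

Definition design := {ffun seqT -> R}.
Definition is_design (P : design) : Prop :=
  (forall s, 0 <= P s) /\ \sum_s P s = 1.

Definition permseq (sigma : {perm 'I_t}) (s : seqT) : seqT :=
  [ffun k => sigma (s k)].
Definition symmetric_design (P : design) : Prop :=
  forall (sigma : {perm 'I_t}) (s : seqT), P (permseq sigma s) = P s.

Definition Tbar (P : design) : 'M[R]_(p, t) := \sum_s P s *: Tmat s.
Definition Fbar (P : design) : 'M[R]_(p, t) := \sum_s P s *: Fmat s.

Definition Cd11 (P : design) : 'M[R]_t :=
  n%:R *: (\sum_s P s *: ((Tmat s)^T *m Amat *m Tmat s)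
           - (Tbar P)^T *m Bmat *m Tbar P).
Definition Cd12 (P : design) : 'M[R]_t :=
  n%:R *: (\sum_s P s *: ((Tmat s)^T *m Amat *m Fmat s)
           - (Tbar P)^T *m Bmat *m Fbar P).
Definition Cd21 (P : design) : 'M[R]_t := (Cd12 P)^T.
Definition Cd22 (P : design) : 'M[R]_t :=
  n%:R *: (\sum_s P s *: ((Fmat s)^T *m Amat *m Fmat s)
           - (Fbar P)^T *m Bmat *m Fbar P).

Definition is_ginv (M G : 'M[R]_t) : Prop := M *m G *m M = M.

Definition Cd (P : design) (G : 'M[R]_t) : 'M[R]_t :=
  Cd11 P - Cd12 P *m G *m Cd21 P.

Definition Bt : 'M[R]_t := 1%:M - (t%:R)^-1 *: const_mx 1.
Definition That (s : seqT) : 'M[R]_(p, t) := Tmat s *m Bt.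
Definition Fhat (s : seqT) : 'M[R]_(p, t) := Fmat s *m Bt.

Definition qs11 (s : seqT) : R := \tr ((That s)^T *m Amat *m That s).
Definition qs12 (s : seqT) : R := \tr ((That s)^T *m Amat *m Fhat s).
Definition qs22 (s : seqT) : R := \tr ((Fhat s)^T *m Amat *m Fhat s).

Definition qd11 (P : design) : R := n%:R * \sum_s P s * qs11 s.
Definition qd12 (P : design) : R := n%:R * \sum_s P s * qs12 s.
Definition qd22 (P : design) : R := n%:R * \sum_s P s * qs22 s.

Definition qstar (P : design) : R := qd11 P - qd12 P ^+ 2 / qd22 P.

End Defs.

Definition completely_symmetric (R : ringType) (t : nat) (M : 'M[R]_t) : Prop :=
  exists c d : R, M = c%:M + d *: const_mx 1.

(* Main.v *)
Require Import Defs.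
From HB Require Import structures.
From mathcomp Require Import all_boot all_order all_algebra all_fingroup.
From mathcomp Require Import ring lra.
Import Order.TTheory GRing.Theory Num.Theory.
Local Open Scope ring_scope.
Set Implicit Arguments. Unset Strict Implicit. Unset Printing Implicit Defensive.

Section S.
Variables (R : realFieldType) (p t n : nat) (a : 'I_p -> R).

Lemma sum_le_delta (k i : 'I_p) (f : 'I_p -> R) : (i <= k)%N ->
  \sum_(l < p | (l <= k)%N) ((i == l)%:R * f l) = f i.
Proof.
move=> ik; rewrite (bigD1 i) //= eqxx mul1r big1 ?addr0 // => l /andP[_ ne].
by rewrite eq_sym (negbTE ne) mul0r.
Qed.

Lemma sum_le_const (k : 'I_p) (c : R) :
  \sum_(l < p | (l <= k)%N) c = k.+1%:R * c.
Proof.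
rewrite (eq_bigl (fun i : 'I_p => true && (i < k.+1)%N)); last by move=> i; rewrite ltnS.
rewrite -(@big_ord_widen_cond R 0 +%R k.+1 p xpredT (fun _ => c) (ltn_ord k)).
by rewrite sumr_const card_ord mulr_natl.
Qed.

Local Notation Bpk := (@Bpk R p).

Lemma cinv (k : 'I_p) : k.+1%:R * (k.+1%:R)^-1 = 1 :> R.
Proof. by rewrite mulfV // pnatr_eq0. Qed.

Lemma Bpk_sym k : (Bpk k)^T = Bpk k.
Proof.
apply/matrixP=> i j; rewrite /Defs.Bpk !mxE andbC eq_sym //.
Qed.

Lemma Bpk_row0 m k : Bpk k *m const_mx 1 = 0 :> 'M[R]_(p, m).
Proof.
apply/matrixP=> i j; rewrite !mxE.
under eq_bigr do rewrite /Defs.Bpk !mxE mulr1.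
case: (leqP i k) => ik /=; last by rewrite big1 // => l _; rewrite leqNgt ik.
  rewrite -big_mkcond /= sumrB.
  under eq_bigr do rewrite -[(i == _)%:R]mulr1.
  by rewrite sum_le_delta // sum_le_const cinv subrr.
Qed.

Lemma Bpk_col0 m k : const_mx 1 *m Bpk k = 0 :> 'M[R]_(m, p).
Proof.
by apply: trmx_inj; rewrite trmx_mul Bpk_sym trmx_const Bpk_row0 trmx0.
Qed.

Lemma Bpk_idem k : Bpk k *m Bpk k = Bpk k.
Proof.
apply/matrixP=> i j; rewrite /Defs.Bpk !mxE.
under eq_bigr do rewrite !mxE.
case: (leqP i k) => ik /=; last first.
  by rewrite big1 // => l _; rewrite mul0r.
case: (leqP j k) => jk /=; last first.
  by rewrite big1 // => l _; rewrite andbF mulr0.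
rewrite (bigID (fun l : 'I_p => (l <= k)%N)) /= [X in _ + X]big1 ?addr0; last first.
  by move=> l /negbTE ->; rewrite mul0r.
under eq_bigr => l lk do rewrite lk /= mulrBr mulrBl mulrBl (eq_sym l j).
rewrite sumrB sumrB sumrB sum_le_delta // sum_le_const.
under [X in _ - X - _]eq_bigr do rewrite mulrC.
rewrite sum_le_delta // sum_le_delta // mulrA cinv mul1r.
by rewrite subrr subr0 eq_sym.
Qed.

Definition Mw (w : 'I_p -> R) : 'M[R]_p := \sum_(k < p) w k *: Bpk k.

Lemma Mw_sym w : (Mw w)^T = Mw w.
Proof.
rewrite /Mw; rewrite raddf_sum; apply: eq_bigr => k _.
apply/matrixP=> i j; have := Bpk_sym k; move/matrixP/(_ i j); rewrite !mxE => ->. by [].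

Qed.

Lemma Mw_row0 m w : Mw w *m const_mx 1 = 0 :> 'M[R]_(p, m).
Proof.
rewrite /Mw mulmx_suml big1 // => k _.
by rewrite -scalemxAl Bpk_row0 scaler0.
Qed.

Lemma Mw_col0 m w : const_mx 1 *m Mw w = 0 :> 'M[R]_(m, p).
Proof.
rewrite /Mw mulmx_sumr big1 // => k _.
by rewrite -scalemxAr Bpk_col0 scaler0.
Qed.

Lemma tr_gram m (M : 'M[R]_(p, m)) : 0 <= \tr (M^T *m M).
Proof.
rewrite /mxtrace; apply: sumr_ge0 => i _; rewrite mxE.
by apply: sumr_ge0 => j _; rewrite mxE -expr2 sqr_ge0.
Qed.

Lemma Mw_psd m w : (forall k, 0 <= w k) ->
  forall Y : 'M[R]_(p, m), 0 <= \tr (Y^T *m Mw w *m Y).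
Proof.
move=> w0 Y; rewrite /Mw mulmx_sumr mulmx_suml raddf_sum /=.
apply: sumr_ge0 => k _.
rewrite -scalemxAr -scalemxAl mxtraceZ mulr_ge0 //.
have -> : Y^T *m Bpk k *m Y = (Bpk k *m Y)^T *m (Bpk k *m Y).
  by rewrite trmx_mul Bpk_sym !mulmxA -[Y^T *m Bpk k *m Bpk k]mulmxA Bpk_idem.
exact: tr_gram.
Qed.

Lemma pow_diff_bound (x d : R) m : 0 <= x -> 0 <= d -> x + d <= 1 ->
  0 <= (x + d) ^+ m - x ^+ m <= m%:R * d.
Proof.
move=> x0 d0 xd1; elim: m => [|m /andP[IH1 IH2]].
  by rewrite !expr0 subrr mul0r lexx.
have xd0 : 0 <= x + d by rewrite addr_ge0.
have x1 : x <= 1 by apply: le_trans xd1; rewrite lerDl.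
have ->: (x + d) ^+ m.+1 - x ^+ m.+1 = (x + d) * ((x + d) ^+ m - x ^+ m) + d * x ^+ m.
  by rewrite !exprS; ring.
apply/andP; split.
  by rewrite addr_ge0 ?mulr_ge0 ?exprn_ge0.
rewrite -addn1 natrD [X in _ <= X]mulrDl mul1r lerD //.
  apply: le_trans IH2; rewrite ler_piMl //.
rewrite ler_piMr // ?exprn_ge0 // exprn_ile1 //.
Qed.

Hypothesis a0 : forall i, 0 <= a i.
Hypothesis a1 : \sum_(i < p) a i = 1.
Hypothesis n1 : (1 <= n)%N.

Lemma a_1k_split k : a_1k a k = a_1km1 a k + a k.
Proof.
rewrite /a_1k /a_1km1 (bigD1 k) //= addrC; congr (_ + _).
by apply: eq_bigl => i; rewrite ltn_neqAle andbC.
Qed.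

Lemma sub_sum_le (P : pred 'I_p) : \sum_(i < p | P i) a i <= 1.
Proof.
rewrite -a1 big_mkcond /=; apply: ler_sum => i _.
by case: ifP.
Qed.

Lemma sub_sum_ge0 (P : pred 'I_p) : 0 <= \sum_(i < p | P i) a i.
Proof. by apply: sumr_ge0. Qed.

Lemma alpha_ge0 k : 0 <= alpha n a k.
Proof.
rewrite /alpha mulr_ge0 ?invr_ge0 ?ler0n //.
have := @pow_diff_bound (a_1km1 a k) (a k) n.+1 (sub_sum_ge0 _) (a0 k).
rewrite -a_1k_split => /(_ (sub_sum_le _)) /andP[_ H].
lra.
Qed.

Lemma A_psd m (Y : 'M[R]_(p, m)) : 0 <= \tr (Y^T *m Amat n a *m Y).
Proof. exact: (Mw_psd alpha_ge0). Qed.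

Lemma mul_perm_E m (M : 'M[R]_(m, t)) (s : {perm 'I_t}) k i :
  (M *m perm_mx s) k i = M k ((s^-1)%g i).
Proof. by rewrite -[s](invgK) -col_permE invgK mxE. Qed.

Lemma perm_eqE (s : {perm 'I_t}) (x i : 'I_t) : (s x == i) = (x == (s^-1)%g i).
Proof. by rewrite -(inj_eq (@perm_inj _ (s^-1)%g)) permK. Qed.

Lemma Tmat_perm (s : {perm 'I_t}) (x : seqT p t) :
  Tmat R (permseq s x) = Tmat R x *m perm_mx s.
Proof.
by apply/matrixP=> k i; rewrite mul_perm_E !mxE /permseq ffunE perm_eqE.
Qed.

Lemma Fmat_perm (s : {perm 'I_t}) (x : seqT p t) :
  Fmat R (permseq s x) = Fmat R x *m perm_mx s.
Proof.
apply/matrixP=> k i; rewrite mul_perm_E !mxE; congr ((nat_of_bool _)%:R).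
by apply/idP/idP => /existsP[kk H]; apply/existsP; exists kk; move: H; rewrite /permseq ffunE perm_eqE.
Qed.

Lemma perm_conj_E (M : 'M[R]_t) (s : {perm 'I_t}) i j :
  ((perm_mx s)^T *m M *m perm_mx s) i j = M ((s^-1)%g i) ((s^-1)%g j).
Proof. by rewrite mul_perm_E tr_perm_mx -row_permE mxE. Qed.

Lemma invariant_cs (M : 'M[R]_t) : (2 <= t)%N ->
  (forall s : {perm 'I_t}, (perm_mx s)^T *m M *m perm_mx s = M) ->
  exists c d : R, M = c%:M + d *: const_mx 1.
Proof.
move=> t2 inv.
have Minv : forall (s : {perm 'I_t}) i j, M (s i) (s j) = M i j.
  by move=> s i j; rewrite -[in RHS](inv (s^-1)%g) perm_conj_E invgK.
have t0 : (0 < t)%N by apply: leq_trans t2.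
pose i0 : 'I_t := Ordinal t0.
pose j0 : 'I_t := Ordinal t2.
have ij0 : i0 != j0 by [].
exists (M i0 i0 - M i0 j0), (M i0 j0).
apply/matrixP => i j; rewrite !mxE.
case: (eqVneq i j) => [<-|nij].
  by have := Minv (tperm i0 i) i0 i0; rewrite tpermL => ->; rewrite mulr1n mulr1 subrK.
rewrite mulr0n add0r mulr1.
pose j1 := tperm i0 i j0.
have ij1 : i != j1.
  by rewrite /j1 -{1}(tpermL i0 i) (inj_eq (@perm_inj _ _)).
pose s := (tperm i0 i * tperm j1 j)%g.
have -> : i = s i0 by rewrite /s permM tpermL tpermD // eq_sym.
have -> : j = s j0 by rewrite /s permM -/j1 tpermL.
by rewrite Minv.
Qed.

Lemma permseq_inj (s : {perm 'I_t}) : injective (@permseq p t s).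
Proof.
move=> x y /ffunP H; apply/ffunP => k; have := H k; rewrite !ffunE.
exact: perm_inj.
Qed.

Lemma sum_perm (V : lmodType R) (P : design R p t) (f : seqT p t -> V)
  (s : {perm 'I_t}) : symmetric_design P ->
  \sum_x P x *: f (permseq s x) = \sum_x P x *: f x.
Proof.
move=> sym; rewrite [RHS](reindex_inj (@permseq_inj s)) /=.
by apply: eq_bigr => x _; rewrite sym.
Qed.

Definition Cgen (M1 M2 : seqT p t -> 'M[R]_(p, t)) (P : design R p t) : 'M[R]_t :=
  n%:R *: (\sum_x P x *: ((M1 x)^T *m Amat n a *m M2 x)
    - (\sum_x P x *: M1 x)^T *m Bmat n a *m (\sum_x P x *: M2 x)).

Lemma Cgen_inv (M1 M2 : seqT p t -> 'M[R]_(p, t)) (P : design R p t)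
  (s : {perm 'I_t}) :
  (forall x, M1 (permseq s x) = M1 x *m perm_mx s) ->
  (forall x, M2 (permseq s x) = M2 x *m perm_mx s) ->
  symmetric_design P ->
  (perm_mx s)^T *m Cgen M1 M2 P *m perm_mx s = Cgen M1 M2 P.
Proof.
move=> h1 h2 sym; rewrite /Cgen -scalemxAr -scalemxAl; congr (_ *: _).
rewrite mulmxBr mulmxBl; congr (_ - _).
  rewrite mulmx_sumr mulmx_suml -[RHS](sum_perm _ s sym).
  apply: eq_bigr => x _; rewrite -scalemxAr -scalemxAl h1 h2; congr (_ *: _).
  by rewrite trmx_mul !mulmxA.
have e1 : (\sum_x P x *: M1 x) *m perm_mx s = \sum_x P x *: M1 x.
  rewrite mulmx_suml -[RHS](sum_perm _ s sym); apply: eq_bigr => x _.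
  by rewrite h1 scalemxAl.
have e2 : (\sum_x P x *: M2 x) *m perm_mx s = \sum_x P x *: M2 x.
  rewrite mulmx_suml -[RHS](sum_perm _ s sym); apply: eq_bigr => x _.
  by rewrite h2 scalemxAl.
by rewrite -[in RHS]e1 -[in RHS]e2 trmx_mul !mulmxA.
Qed.

Lemma Tmat_J m (x : seqT p t) : Tmat R x *m const_mx 1 = const_mx 1 :> 'M[R]_(p, m).
Proof.
apply/matrixP=> k j; rewrite !mxE.
under eq_bigr do rewrite !mxE mulr1.
rewrite (bigD1 (x k)) //= eqxx big1 ?addr0 // => i /negbTE.
by rewrite eq_sym => ->.
Qed.

Lemma JJ m l : const_mx 1 *m (const_mx 1 : 'M[R]_(t, l)) = t%:R *: const_mx 1 :> 'M[R]_(m, l).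
Proof.
apply/matrixP=> i j; rewrite !mxE.
under eq_bigr do rewrite !mxE mulr1.
by rewrite sumr_const card_ord mulr1.
Qed.

Lemma const_scale m l (c : R) : const_mx c = c *: const_mx 1 :> 'M[R]_(m, l).
Proof. by apply/matrixP=> i j; rewrite !mxE mulr1. Qed.

Lemma J_Cgen_T M2 P : (const_mx 1 : 'M[R]_t) *m Cgen (@Tmat R p t) M2 P = 0.
Proof.
rewrite /Cgen -scalemxAr mulmxBr mulmx_sumr big1; last first.
  move=> x _; rewrite -scalemxAr !mulmxA.
  have -> : const_mx 1 *m (Tmat R x)^T = (const_mx 1 : 'M[R]_(t, p)).
    by apply: trmx_inj; rewrite trmx_mul !trmx_const trmxK Tmat_J.
  by rewrite /Amat -/(Mw _) Mw_col0 mul0mx scaler0.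
rewrite !mulmxA.
have -> : const_mx 1 *m (\sum_x P x *: Tmat R x)^T = 
   (\sum_x P x) *: (const_mx 1 : 'M[R]_(t, p)).
  apply: trmx_inj; rewrite trmx_mul !trmx_const trmxK mulmx_suml linearZ /= trmx_const.
  rewrite scaler_suml; apply: eq_bigr => x _.
  by rewrite -scalemxAl Tmat_J.
by rewrite -scalemxAl /Bmat -/(Mw _) Mw_col0 scaler0 !mul0mx sub0r oppr0 scaler0.
Qed.

Hypothesis t2 : (2 <= t)%N.

Local Notation J := (const_mx 1 : 'M[R]_t).
Local Notation Bt := (Bt R t).

Lemma tnz : t%:R != 0 :> R.
Proof. by rewrite pnatr_eq0 -lt0n (leq_trans _ t2). Qed.

Lemma JB : J *m Bt = 0.
Proof.
rewrite /Defs.Bt mulmxBr mulmx1 -scalemxAr JJ scalerA mulVf ?tnz // scale1r.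
by rewrite subrr.
Qed.

Lemma BJ : Bt *m J = 0.
Proof.
rewrite /Defs.Bt mulmxBl mul1mx -scalemxAl JJ scalerA mulVf ?tnz // scale1r.
by rewrite subrr.
Qed.

Lemma BB : Bt *m Bt = Bt.
Proof. by rewrite {1}/Defs.Bt mulmxBl mul1mx -scalemxAl JB scaler0 subr0. Qed.

Lemma Bt_sym : Bt^T = Bt.
Proof.
rewrite /Defs.Bt; apply/matrixP=> i j; rewrite !mxE eq_sym //.
Qed.

Lemma tr_Bt : \tr Bt = t%:R - 1.
Proof.
rewrite /Defs.Bt raddfB /= mxtraceZ mxtrace1.
rewrite /mxtrace; under eq_bigr do rewrite mxE.
by rewrite sumr_const card_ord mulVf ?tnz.
Qed.

Lemma cs_to_B (M : 'M[R]_t) c d : M = c%:M + d *: J -> J *m M = 0 -> M = c *: Bt.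
Proof.
move=> -> h; pose i0 : 'I_t := Ordinal (ltnW t2).
have: (J *m (c%:M + d *: J)) i0 i0 = 0 by rewrite h mxE.
rewrite mulmxDr -scalemxAr JJ mul_mx_scalar !mxE !mulr1 => e.
have -> : d = - (c / t%:R).
  apply/eqP; rewrite -subr_eq0 opprK; apply/eqP.
  apply: (mulfI tnz); rewrite mulr0 -e mulrDr mulrCA mulfV ?tnz // mulr1.
  by rewrite mulrC addrC.
rewrite /Defs.Bt scalerBr scalemx1 scalerA; congr (_ + _).
by rewrite scaleNr mulrC.
Qed.

Lemma rowinv_B m (M : 'M[R]_(m, t)) :
  (forall s : {perm 'I_t}, M *m perm_mx s = M) -> M *m Bt = 0.
Proof.
move=> inv; pose i0 : 'I_t := Ordinal (ltnW t2).
have Mc : forall k i, M k i = M k i0.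
  move=> k i; have := inv (tperm i i0); move/matrixP/(_ k i0).
  by rewrite mul_perm_E tpermV tpermR.
apply/matrixP=> k i; rewrite /Defs.Bt mulmxBr mulmx1 -scalemxAr !mxE.
under eq_bigr do rewrite !mxE mulr1 Mc.
rewrite sumr_const card_ord Mc -mulr_natr; field; exact: tnz.
Qed.

Lemma Mbar_inv (M1 : seqT p t -> 'M[R]_(p, t)) (P : design R p t) :
  (forall s x, M1 (permseq s x) = M1 x *m perm_mx s) ->
  symmetric_design P -> (\sum_x P x *: M1 x) *m Bt = 0.
Proof.
move=> h sym; apply: rowinv_B => s.
rewrite mulmx_suml -[RHS](sum_perm _ s sym); apply: eq_bigr => x _.
by rewrite h scalemxAl.
Qed.

Lemma tr_Cgen_B (M1 M2 : seqT p t -> 'M[R]_(p, t)) (P : design R p t) : (\sum_x P x *: M2 x) *m Bt = 0 ->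
  \tr (Cgen M1 M2 P *m Bt) =
  n%:R * \sum_x P x * \tr ((M1 x *m Bt)^T *m Amat n a *m (M2 x *m Bt)).
Proof.
move=> h; rewrite /Cgen -scalemxAl mxtraceZ mulmxBl -!mulmxA h !mulmx0 subr0.
congr (_ * _); rewrite mulmx_suml raddf_sum /=; apply: eq_bigr => x _.
rewrite -scalemxAl mxtraceZ; congr (_ * _).
rewrite trmx_mul Bt_sym !mulmxA [RHS]mxtrace_mulC !mulmxA BB.
by rewrite -!mulmxA [RHS]mxtrace_mulC !mulmxA.
Qed.

Lemma A_sym : (Amat n a)^T = Amat n a.
Proof. exact: Mw_sym. Qed.

Lemma quad_form (Y Z : 'M[R]_(p, t)) (l : R) :
  \tr ((Y + l *: Z)^T *m Amat n a *m (Y + l *: Z)) =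
  \tr (Y^T *m Amat n a *m Y) + 2 * l * \tr (Y^T *m Amat n a *m Z)
  + l ^+ 2 * \tr (Z^T *m Amat n a *m Z).
Proof.
have sw : \tr (Z^T *m Amat n a *m Y) = \tr (Y^T *m Amat n a *m Z).
  by rewrite -mxtrace_tr !trmx_mul trmxK A_sym mulmxA.
have e : (Y + l *: Z)^T = Y^T + l *: Z^T by apply/matrixP=> i j; rewrite !mxE.
rewrite e !mulmxDl !mulmxDr -!scalemxAl -!scalemxAr !mxtraceD !mxtraceZ sw.
ring.
Qed.

Lemma qd_quad (P : design R p t) : (forall x, 0 <= P x) -> forall l,
  0 <= qd11 n a P + 2 * l * qd12 n a P + l ^+ 2 * qd22 n a P.
Proof.
move=> P0 l.
have -> : qd11 n a P + 2 * l * qd12 n a P + l ^+ 2 * qd22 n a P =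
  \sum_x n%:R * P x * \tr ((That R x + l *: Fhat R x)^T *m Amat n a
                           *m (That R x + l *: Fhat R x)).
  rewrite /qd11 /qd12 /qd22 !mulr_sumr -!big_split /=; apply: eq_bigr => x _.
  rewrite quad_form /qs11 /qs12 /qs22; ring.
apply: sumr_ge0 => x _; rewrite mulr_ge0 ?ler0n ?P0 //.
  by rewrite mulr_ge0 ?ler0n ?P0.
exact: A_psd.
Qed.

Lemma QB (s : {perm 'I_t}) : perm_mx s *m Bt = Bt *m perm_mx s.
Proof.
have h1 : perm_mx s *m J = J by rewrite -row_permE; apply/matrixP=> i j; rewrite !mxE.
have h2 : J *m perm_mx s = J by apply/matrixP=> i j; rewrite mul_perm_E !mxE.
by rewrite /Defs.Bt mulmxBr mulmxBl mulmx1 mul1mx -scalemxAr -scalemxAl h1 h2.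
Qed.

Lemma QQt (s : {perm 'I_t}) : perm_mx s *m (perm_mx s)^T = 1%:M :> 'M[R]_t.
Proof. by rewrite tr_perm_mx -perm_mxM mulgV perm_mx1. Qed.

Lemma tr_perm_inv (Y Z : 'M[R]_(p, t)) (s : {perm 'I_t}) :
  \tr ((Y *m perm_mx s *m Bt)^T *m Amat n a *m (Z *m perm_mx s *m Bt)) =
  \tr ((Y *m Bt)^T *m Amat n a *m (Z *m Bt)).
Proof.
rewrite -!mulmxA !QB !mulmxA trmx_mul mxtrace_mulC !mulmxA.
by rewrite QQt mul1mx.
Qed.

Definition symz (P : design R p t) : design R p t :=
  [ffun x => (#|{perm 'I_t}|%:R)^-1 * \sum_(s : {perm 'I_t}) P (permseq s x)].

Lemma Nnz : (#|{perm 'I_t}|%:R : R) != 0.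
Proof. by rewrite pnatr_eq0 -lt0n; apply/card_gt0P; exists 1%g. Qed.

Lemma symz_sum (P : design R p t) (f : seqT p t -> R) :
  (forall s x, f (permseq s x) = f x) ->
  \sum_x symz P x * f x = \sum_x P x * f x.
Proof.
move=> finv.
under eq_bigr do rewrite ffunE -mulrA mulr_suml.
rewrite -mulr_sumr exchange_big /=.
rewrite (eq_bigr (fun _ => \sum_x P x * f x)).
  rewrite sumr_const; move: Nnz; set N := #|_|; set S := \sum_x _ => hN.
  by rewrite -[S *+ _]mulr_natr mulrCA mulVf // mulr1.
move=> s _; rewrite (reindex_inj (@permseq_inj (s^-1)%g)) /=.
apply: eq_bigr => x _; rewrite finv; congr (P _ * _).
by apply/ffunP => k; rewrite !ffunE permKV.
Qed.

Lemma symz_design P : is_design P -> is_design (symz P).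
Proof.
move=> [P0 P1]; split.
  move=> x; rewrite ffunE mulr_ge0 ?invr_ge0 ?ler0n //.
  by apply: sumr_ge0 => s _.
have := @symz_sum P (fun _ => 1) (fun _ _ => erefl).
by under eq_bigr do rewrite mulr1; under [in RHS]eq_bigr do rewrite mulr1; move=> ->.
Qed.

Lemma permseqM (s u : {perm 'I_t}) (x : seqT p t) :
  permseq s (permseq u x) = permseq (u * s)%g x.
Proof. by apply/ffunP => k; rewrite !ffunE permM. Qed.

Lemma symz_sym P : symmetric_design (symz P).
Proof.
move=> u x; rewrite !ffunE; congr (_ * _).
rewrite [RHS](reindex_inj (mulgI u)) /=.
by apply: eq_bigr => s _; rewrite permseqM.
Qed.

Lemma qs_inv : forall (s : {perm 'I_t}) (x : seqT p t),
  [/\ qs11 n a (permseq s x) = qs11 n a x,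
      qs12 n a (permseq s x) = qs12 n a x &
      qs22 n a (permseq s x) = qs22 n a x].
Proof.
move=> s x; rewrite /qs11 /qs12 /qs22 /That /Fhat !Tmat_perm !Fmat_perm.
by rewrite !tr_perm_inv.
Qed.

Lemma symz_qstar P : qstar n a (symz P) = qstar n a P.
Proof.
have e11 : qd11 n a (symz P) = qd11 n a P.
  by rewrite /qd11 symz_sum // => s x; case: (qs_inv s x).
have e12 : qd12 n a (symz P) = qd12 n a P.
  by rewrite /qd12 symz_sum // => s x; case: (qs_inv s x).
have e22 : qd22 n a (symz P) = qd22 n a P.
  by rewrite /qd22 symz_sum // => s x; case: (qs_inv s x).
by rewrite /qstar e11 e12 e22.
Qed.

Lemma tm1nz : t%:R - 1 != 0 :> R.
Proof.
rewrite subr_eq0 -[1 as X in _ == X]/(1%:R) eqr_nat; apply/negP => /eqP e.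
by move: t2; rewrite e.
Qed.

Lemma part1 (P : design R p t) (G : 'M[R]_t) :
  is_design P -> symmetric_design P -> is_ginv (Cd22 n a P) G ->
  completely_symmetric (Cd n a P G) /\ \tr (Cd n a P G) = qstar n a P.
Proof.
move=> [P0 P1] sym gi.
have hT := Tmat_perm; have hF := Fmat_perm.
have E11 : Cd11 n a P = Cgen (@Tmat R p t) (@Tmat R p t) P by [].
have E12 : Cd12 n a P = Cgen (@Tmat R p t) (@Fmat R p t) P by [].
have E22 : Cd22 n a P = Cgen (@Fmat R p t) (@Fmat R p t) P by [].
have [c11 [d11 e11]] : exists c d : R, Cd11 n a P = c%:M + d *: J.
  by apply: invariant_cs => // s; rewrite E11 Cgen_inv.
have [c12 [d12 e12]] : exists c d : R, Cd12 n a P = c%:M + d *: J.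
  by apply: invariant_cs => // s; rewrite E12 Cgen_inv.
have [c22 [d22 e22]] : exists c d : R, Cd22 n a P = c%:M + d *: J.
  by apply: invariant_cs => // s; rewrite E22 Cgen_inv.
have {e11 d11}e11 : Cd11 n a P = c11 *: Bt.
  by apply: (cs_to_B e11); rewrite E11 J_Cgen_T.
have {e12 d12}e12 : Cd12 n a P = c12 *: Bt.
  by apply: (cs_to_B e12); rewrite E12 J_Cgen_T.
have TB : (\sum_x P x *: Tmat R x) *m Bt = 0 by apply: Mbar_inv.
have FB : (\sum_x P x *: Fmat R x) *m Bt = 0 by apply: Mbar_inv.
have q11 : qd11 n a P = c11 * (t%:R - 1).
  rewrite /qd11 /qs11 /That -tr_Cgen_B // -E11 e11 -scalemxAl BB mxtraceZ tr_Bt //.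
have q12 : qd12 n a P = c12 * (t%:R - 1).
  rewrite /qd12 /qs12 /That /Fhat -tr_Cgen_B // -E12 e12 -scalemxAl BB mxtraceZ tr_Bt //.
have q22 : qd22 n a P = c22 * (t%:R - 1).
  rewrite /qd22 /qs22 /Fhat -tr_Cgen_B // -E22 e22 mulmxDl -scalemxAl JB scaler0 addr0.
  by rewrite mul_scalar_mx mxtraceZ tr_Bt.
have c12z : c22 = 0 -> c12 = 0.
  move=> c220; have : qd12 n a P = 0.
    apply/eqP/negPn/negP => h.
    have := qd_quad P0 (- (qd11 n a P + 1) / (2 * qd12 n a P)).
    rewrite q22 c220 mul0r mulr0 addr0.
    rewrite (_ : 2 * _ * qd12 n a P = - (qd11 n a P + 1)); first by move=> H; lra.
    by field; rewrite h.
  by rewrite q12 => /eqP; rewrite mulf_eq0 (negbTE tm1nz) orbF => /eqP.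
have eCd : Cd n a P G = (c11 - c12 ^+ 2 / c22) *: Bt.
  have trZ : (c12 *: Bt)^T = c12 *: Bt.
    by rewrite -{2}Bt_sym; apply/matrixP=> i j; rewrite !mxE.
  rewrite /Cd /Cd21 e11 e12 trZ -!scalemxAl -!scalemxAr scalerA.
  have [c220|c22n0] := eqVneq c22 0.
    rewrite (c12z c220).
    by rewrite mul0r scale0r subr0 c220 expr0n /= mul0r subr0.
  have BGB : Bt *m G *m Bt = c22^-1 *: Bt.
    have BM : Bt *m Cd22 n a P = c22 *: Bt.
      by rewrite e22 mulmxDr mul_mx_scalar -scalemxAr BJ scaler0 addr0.
    have MB : Cd22 n a P *m Bt = c22 *: Bt.
      by rewrite e22 mulmxDl mul_scalar_mx -scalemxAl JB scaler0 addr0.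
    have : Bt *m (Cd22 n a P *m G *m Cd22 n a P) *m Bt = c22 *: Bt.
      by rewrite gi -mulmxA MB -scalemxAr BB.
    have -> : Bt *m (Cd22 n a P *m G *m Cd22 n a P) *m Bt =
      (Bt *m Cd22 n a P) *m G *m (Cd22 n a P *m Bt) by rewrite !mulmxA.
    rewrite BM MB -scalemxAr -!scalemxAl scalerA => h.
    apply: (@scalerI _ _ (c22 * c22)); first by rewrite mulf_neq0.
    by rewrite h scalerA -mulrA mulfV // mulr1.
  rewrite BGB scalerA -scalerBl; congr (_ *: _); rewrite expr2; field.
rewrite eCd; split.
  exists (c11 - c12 ^+ 2 / c22), (- ((c11 - c12 ^+ 2 / c22) / t%:R)).
  by rewrite /Defs.Bt scalerBr scalemx1 scalerA scaleNr mulrC.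
rewrite mxtraceZ tr_Bt /qstar q11 q12 q22.
have [c220|c22n0] := eqVneq c22 0.
  by rewrite (c12z c220) c220 !mul0r expr0n /= mul0r !subr0.
by field; rewrite c22n0 tm1nz.
Qed.

End S.

Theorem theorem3p2 (R : realFieldType) (p t n : nat) (a : 'I_p -> R) :
  (2 <= p)%N -> (2 <= t)%N -> (1 <= n)%N ->
  (forall i, 0 <= a i) -> \sum_(i < p) a i = 1 ->
  (forall P : design R p t, is_design P -> symmetric_design P ->
     forall G : 'M[R]_t, is_ginv (Cd22 n a P) G ->
       completely_symmetric (Cd n a P G) /\ \tr (Cd n a P G) = qstar n a P)
  /\
  (forall P : design R p t, is_design P ->
     exists P' : design R p t,
       [/\ is_design P', symmetric_design P' & qstar n a P' = qstar n a P]).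
Proof.
move=> p2 t2 n1 a0 a1; split.
  by move=> P dP sP G gi; apply: part1.
move=> P dP; exists (symz P); split.
- exact: symz_design.
- exact: symz_sym.
- exact: symz_qstar.
Qed.
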